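(* Let $\Gamma$ be a simplicial complex on the vertex set $V_1=\{x_1,\ldots,x_n\}$, and let $\Gamma_1,\ldots,\Gamma_m$ ($m\geq1$) be simplicial subcomplexes of $\Gamma$ with $\Gamma=\bigcup_{j=1}^m\Gamma_j$ (some $\Gamma_j$ may equal $\{\varnothing\}$). Let $y_1,\ldots,y_m$ be new vertices and define \[\widetilde\Gamma=\left\{\sigma\cup\tau:\ \sigma\in\Gamma,\ \tau\subseteq\{y_j:\sigma\in\Gamma_j\}\right\}.\] Then $\widetilde\Gamma$ is contractible.
   Context: Simplicial complexes contain the empty face; $\widetilde\Gamma$ is a simplicial complex on $V_1\cup\{y_1,\ldots,y_m\}$, and contractibility refers to its geometric realization. *)

(* Defs.v *)
From HB Require Import structures.
From mathcomp Require Import all_boot all_order all_algebra.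
From mathcomp Require Import all_classical all_reals all_analysis.
Set Implicit Arguments. Unset Strict Implicit. Unset Printing Implicit Defensive.
Import Order.TTheory GRing.Theory Num.Theory.
Import numFieldNormedType.Exports.

Definition simplicial_complex (T : finType) (K : {set {set T}}) : Prop :=
  (finset.set0 : {set T}) \in K /\ (forall s t : {set T}, s \in K -> t \subset s -> t \in K).

(* Gamma-tilde: vertices are  inl x_i  (the old vertices V_1)  and  inr j
   (the new vertex y_j).  Faces are  sigma u tau  with sigma in Gamma and
   tau a subset of {y_j : sigma in Gamma_j}. *)
Definition tilde_complex (n m : nat) (Gamma : {set {set 'I_n}})
    (Gs : 'I_m -> {set {set 'I_n}}) : {set {set ('I_n + 'I_m)%type}} :=
  [set ((@inl 'I_n 'I_m) @: s) :|: ((@inr 'I_n 'I_m) @: t)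
     | s : {set 'I_n} in Gamma,
       t : {set 'I_m} in powerset [set j : 'I_m | s \in Gs j]].

Local Open Scope ring_scope.
Local Open Scope classical_set_scope.

(* Geometric realization of a complex K on the finite vertex type T, as a
   subset of R^T (product = Euclidean topology): the points with nonnegative
   barycentric coordinates summing to 1 whose support is a face of K. *)
Definition geom_real (R : realType) (T : finType) (K : {set {set T}})
    : set {ptws T -> R} :=
  [set x : {ptws T -> R} | (forall v, 0 <= x v) /\ \sum_(v : T) x v = 1 /\
     finset (fun v : T => x v != 0) \in K].

Definition contractible (R : realType) (X : topologicalType) (A : set X) : Prop :=
  exists (x0 : X) (H : R * X -> X),
    A x0 /\
    {within `[0, 1]%classic `*` A, continuous H} /\
    (forall t x, (0 <= t <= 1) -> A x -> A (H (t, x))) /\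
    (forall x, A x -> H (0, x) = x) /\
    (forall x, A x -> H (1, x) = x0).

(* Main.v *)
From HB Require Import structures.
From mathcomp Require Import all_boot all_order all_algebra.
From mathcomp Require Import all_classical all_reals all_analysis.
Require Import Defs.
From mathcomp Require Import lra.
Import numFieldNormedType.Exports.
Set Implicit Arguments. Unset Strict Implicit. Unset Printing Implicit Defensive.
Import Order.TTheory GRing.Theory Num.Theory.
Section PT.
Local Open Scope ring_scope.
Local Open Scope classical_set_scope.

Lemma ptws_cont_at (R : realType) (X : topologicalType) (T : Type)
  (h : X -> {ptws T -> R}) (x : X) :
  (forall i, {for x, continuous (fun z => h z i)}) -> {for x, continuous h}.
Proof.
move=> hc; rewrite /continuous_at.
apply/cvg_sup => i.
apply/cvg_image.
  rewrite eqEsubset; split=> y // _; exists (fun _ => y) => //.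
move=> B /= hB.
have := hc i B hB.
rewrite /= nbhs_simpl => P.
exists ((fun f : {ptws T -> R} => f i) @^-1` B) => //.
apply: image_preimage; rewrite eqEsubset; split=> y // _; exists (fun _ => y).
Qed.

End PT.

Section C.
Variables (R : realType) (X : topologicalType).
Local Open Scope ring_scope.
Local Open Scope classical_set_scope.
Implicit Types (f g : X -> R) (x : X).
Lemma cD f g x : {for x, continuous f} -> {for x, continuous g} ->
  {for x, continuous (fun z => f z + g z)}.
Proof. by move=> hf hg; apply: cvgD. Qed.
Lemma cB f g x : {for x, continuous f} -> {for x, continuous g} ->
  {for x, continuous (fun z => f z - g z)}.
Proof. by move=> hf hg; apply: cvgB. Qed.
Lemma cM f g x : {for x, continuous f} -> {for x, continuous g} ->
  {for x, continuous (fun z => f z * g z)}.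
Proof. by move=> hf hg; apply: cvgM. Qed.
Lemma cC (c : R) x : {for x, continuous (fun _ : X => c)}.
Proof. exact: cvg_cst. Qed.
Lemma cMax f g x : {for x, continuous f} -> {for x, continuous g} ->
  {for x, continuous (fun z => Num.max (f z) (g z))}.
Proof. by move=> hf hg; apply: (@continuous_max R X f g x). Qed.
Lemma cMin f g x : {for x, continuous f} -> {for x, continuous g} ->
  {for x, continuous (fun z => Num.min (f z) (g z))}.
Proof. by move=> hf hg; apply: (@continuous_min R X f g x). Qed.
Lemma cS (I : Type) (r : seq I) (P : pred I) (F : I -> X -> R) x :
  (forall i, {for x, continuous (F i)}) ->
  {for x, continuous (fun z => \sum_(i <- r | P i) F i z)}.
Proof.
move=> hF; elim: r => [|i r IH].
  have -> : (fun z => \sum_(i <- [::] | P i) F i z) = (fun _ => 0).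
    by apply: funext => z; rewrite big_nil.
  exact: cvg_cst.
have -> : (fun z => \sum_(j <- i :: r | P j) F j z) =
  (fun z => if P i then F i z + \sum_(j <- r | P j) F j z else \sum_(j <- r | P j) F j z).
  by apply: funext => z; rewrite big_cons.
case: (P i) => //.
exact: cD.
Qed.
Lemma cDiv f g x : g x != 0 -> {for x, continuous f} -> {for x, continuous g} ->
  {for x, continuous (fun z => f z / g z)}.
Proof. by move=> g0 hf hg; apply: cvgM => //; apply: cvgV. Qed.
End C.

Section CC.
Local Open Scope ring_scope.
Local Open Scope classical_set_scope.
Lemma c_fst (R : realType) (Y : topologicalType) (p : R * Y) :
  {for p, continuous (fun q : R * Y => q.1)}.
Proof. exact: cvg_fst. Qed.
Lemma c_snd (R : realType) (T : eqType) (p : R * {ptws T -> R}) (a : T) :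
  {for p, continuous (fun q : R * {ptws T -> R} => q.2 a)}.
Proof.
apply: (@cvg_comp _ _ _ (fun q : R * {ptws T -> R} => q.2) (fun f : {ptws T -> R} => f a)).
  exact: cvg_snd.
exact: (@proj_continuous T (fun _ => R) a).
Qed.

End CC.
Section Helpers.
Local Open Scope ring_scope.
Local Open Scope classical_set_scope.

Definition Wf (R : realType) (n m : nat) (Gs : 'I_m -> {set {set 'I_n}}) (j0 : 'I_m)
  (p : R * {ptws ('I_n + 'I_m)%type -> R}) (a : ('I_n + 'I_m)%type) : R :=
  match a with
  | inl v => Num.max 0 (p.2 (inl v) - 2 * p.1)
  | inr j => Num.min 1 (2 - 2 * p.1) *
       (p.2 (inr j) + \sum_(s in Gs j) Num.max 0 (2 * p.1 - \sum_(v | v \notin s) p.2 (inl v)))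
       + (if j == j0 then Num.max 0 (2 * p.1 - 1) else 0)
  end.

Definition Sf (R : realType) (n m : nat) (Gs : 'I_m -> {set {set 'I_n}}) (j0 : 'I_m)
  (p : R * {ptws ('I_n + 'I_m)%type -> R}) : R := \sum_a Wf Gs j0 p a.

Definition Hf (R : realType) (n m : nat) (Gs : 'I_m -> {set {set 'I_n}}) (j0 : 'I_m)
  (p : R * {ptws ('I_n + 'I_m)%type -> R}) : {ptws ('I_n + 'I_m)%type -> R} :=
  fun a => Wf Gs j0 p a / Sf Gs j0 p.

Lemma Wf_cont (R : realType) (n m : nat) (Gs : 'I_m -> {set {set 'I_n}}) (j0 : 'I_m) a p :
  {for p, continuous (fun q => @Wf R n m Gs j0 q a)}.
Proof.
case: a => [v|j] /=.
  apply: cMax; first exact: cC.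
  apply: cB; first exact: c_snd.
  apply: cM; [exact: cC|exact: c_fst].
apply: cD.
  apply: cM.
    apply: cMin; first exact: cC.
    apply: cB; first exact: cC.
    apply: cM; [exact: cC|exact: c_fst].
  apply: cD; first exact: c_snd.
  apply: cS => s.
  apply: cMax; first exact: cC.
  apply: cB; first by apply: cM; [exact: cC|exact: c_fst].
  apply: cS => v; exact: c_snd.
case: (j == j0); last exact: cC.
apply: cMax; first exact: cC.
apply: cB; last exact: cC.
apply: cM; [exact: cC|exact: c_fst].
Qed.

End Helpers.

Section Helpers2.
Local Open Scope ring_scope.
Local Open Scope classical_set_scope.

Lemma nlr (n m : nat) (v : 'I_n) (t : {set 'I_m}) :
  (@inl 'I_n 'I_m v \in inr @: t) = false.
Proof. by apply/imsetP => -[]. Qed.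
Lemma nrl (n m : nat) (j : 'I_m) (s : {set 'I_n}) :
  (@inr 'I_n 'I_m j \in inl @: s) = false.
Proof. by apply/imsetP => -[]. Qed.
Lemma inl_injT (n m : nat) : injective (@inl 'I_n 'I_m).
Proof. by move=> a b []. Qed.
Lemma inr_injT (n m : nat) : injective (@inr 'I_n 'I_m).
Proof. by move=> a b []. Qed.

Lemma geom_inv (R : realType) n m (Gamma : {set {set 'I_n}}) (Gs : 'I_m -> {set {set 'I_n}})
  (x : {ptws ('I_n + 'I_m)%type -> R}) :
  geom_real (tilde_complex Gamma Gs) x ->
  exists2 s0, s0 \in Gamma & [/\ forall v, v \notin s0 -> x (inl v) = 0,
     forall v, x (inl v) != 0 -> v \in s0 & forall j, x (inr j) != 0 -> s0 \in Gs j].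
Proof.
case=> _ [_ /imset2P [s0 t0 hs0 ht0 E]]; exists s0 => //.
have key a : (x a != 0) = (a \in inl @: s0 :|: inr @: t0) by rewrite -E inE.
have kl v : (x (inl v) != 0) = (v \in s0).
  by rewrite key finset.in_setU nlr orbF mem_imset //; exact: inl_injT.
split.
- by move=> v vn; apply/eqP; apply/negPn; rewrite kl.
- by move=> v; rewrite kl.
- move=> j; rewrite key finset.in_setU nrl /= mem_imset; last exact: inr_injT.
  move=> hj; rewrite inE in ht0; have := fintype.subsetP ht0 j hj; by rewrite inE.
Qed.

Lemma le1 (R : realType) (T : finType) (x : T -> R) a :
  (forall b, 0 <= x b) -> \sum_b x b = 1 -> x a <= 1.
Proof.
move=> h0 hs; rewrite -hs (bigD1 a) //= lerDl; exact: sumr_ge0.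
Qed.

Lemma in_tilde (R : realType) n m (Gamma : {set {set 'I_n}}) (Gs : 'I_m -> {set {set 'I_n}})
  (y : ('I_n + 'I_m)%type -> R) s :
  s \in Gamma -> (forall v, (y (inl v) != 0) = (v \in s)) ->
  (forall j, y (inr j) != 0 -> s \in Gs j) ->
  finset (fun a => y a != 0) \in tilde_complex Gamma Gs.
Proof.
move=> hs hv hj; apply/imset2P; exists s [set j | y (inr j) != 0]%SET => //.
  rewrite inE; apply/fintype.subsetP => j; rewrite !inE; exact: hj.
apply/setP => -[v|j]; rewrite finset.in_set finset.in_setU.
  by rewrite nlr orbF mem_imset ?hv //; exact: inl_injT.
by rewrite nrl /= mem_imset ?inE //; exact: inr_injT.
Qed.

Lemma maxpos (R : realType) (y : R) : Num.max 0 y != 0 -> 0 < y.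
Proof.
rewrite maxEle; case: ifP => [h0 hne|_ /eqP //]; by rewrite lt_def hne h0.
Qed.
Lemma max_eq0 (R : realType) (y : R) : y <= 0 -> Num.max 0 y = 0.
Proof.
move=> h; rewrite maxEle; case: ifP => // h0; apply/eqP; by rewrite eq_le h h0.
Qed.
Lemma max_id (R : realType) (y : R) : 0 <= y -> Num.max 0 y = y.
Proof. by move=> h; rewrite maxEle h. Qed.
Lemma min_1 (R : realType) (y : R) : 1 <= y -> Num.min 1 y = 1.
Proof. by move=> h; rewrite minEle h. Qed.
Lemma min_2 (R : realType) (y : R) : y <= 1 -> Num.min 1 y = y.
Proof.
move=> h; rewrite minEle; case: ifP => // h0; apply/eqP; by rewrite eq_le h h0.
Qed.

Lemma max0_ge0 (R : realType) (y : R) : 0 <= Num.max 0 y.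
Proof. by rewrite maxEle; case: ifP. Qed.

End Helpers2.

Section Helpers3.
Local Open Scope ring_scope.
Local Open Scope classical_set_scope.

Definition ef (R : realType) n m (j0 : 'I_m) : {ptws ('I_n + 'I_m)%type -> R} :=
  fun a => match a with inl _ => 0 | inr j => if j == j0 then 1 else 0 end.

Lemma W_ge0 (R : realType) n m (Gs : 'I_m -> {set {set 'I_n}}) j0 (t : R) x a :
  0 <= t <= 1 -> (forall b, 0 <= x b) -> 0 <= Wf Gs j0 (t, x) a.
Proof.
move=> /andP[t0 t1] hx; case: a => [v|j] /=; first exact: max0_ge0.
apply: addr_ge0; last by case: (j == j0) => //; exact: max0_ge0.
apply: mulr_ge0.
  rewrite minEle; case: ifP => // _; lra.
apply: addr_ge0 => //; apply: sumr_ge0 => s _; exact: max0_ge0.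
Qed.

Lemma W_zero (R : realType) n m (Gs : 'I_m -> {set {set 'I_n}}) j0
  (x : {ptws ('I_n + 'I_m)%type -> R}) a :
  (forall b, 0 <= x b) -> Wf Gs j0 (0, x) a = x a.
Proof.
move=> hx; case: a => [v|j] /=.
  by rewrite mulr0 subr0 max_id.
rewrite mulr0 subr0 min_1; last lra.
rewrite big1 ?addr0 ?mul1r.
  by case: (j == j0); rewrite ?addr0 // max_eq0 ?addr0 //; lra.
move=> s _; rewrite max_eq0 // sub0r oppr_le0; exact: sumr_ge0.
Qed.

Lemma W_one (R : realType) n m (Gs : 'I_m -> {set {set 'I_n}}) j0
  (x : {ptws ('I_n + 'I_m)%type -> R}) a :
  (forall b, x b <= 1) -> Wf Gs j0 (1, x) a = ef R j0 a.
Proof.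
move=> hx; case: a => [v|j] /=.
  by rewrite max_eq0 //; have := hx (inl v); lra.
rewrite mulr1 min_2; last lra.
have -> : (2 - 2 : R) = 0 by lra.
rewrite mul0r add0r; case: (j == j0) => //; rewrite max_id; lra.
Qed.

Lemma S_ge (R : realType) n m (Gs : 'I_m -> {set {set 'I_n}}) j0 (t : R) x a :
  0 <= t <= 1 -> (forall b, 0 <= x b) -> Wf Gs j0 (t, x) a <= Sf Gs j0 (t, x).
Proof.
move=> ht hx; rewrite /Sf (bigD1 a) //= lerDl; apply: sumr_ge0 => b _.
exact: W_ge0.
Qed.

Lemma sum_ef (R : realType) n m (j0 : 'I_m) : \sum_a ef R (n:=n) j0 a = 1.
Proof.
rewrite big_sumType /= big1 // add0r -big_mkcond /=.
by rewrite big_pred1_eq.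
Qed.

End Helpers3.

Section Helpers4.
Local Open Scope ring_scope.
Local Open Scope classical_set_scope.

Lemma S_pos (R : realType) n m (Gamma : {set {set 'I_n}}) (Gs : 'I_m -> {set {set 'I_n}})
  (j0 : 'I_m) (t : R) (x : {ptws ('I_n + 'I_m)%type -> R}) :
  Gamma = (\bigcup_(j < m) Gs j)%SET -> 0 <= t <= 1 ->
  geom_real (tilde_complex Gamma Gs) x -> 0 < Sf Gs j0 (t, x).
Proof.
move=> GU ht hA.
have hA' := hA; case: hA' => hx [hs _].
have [s0 hs0 [hout _ _]] := geom_inv hA.
case/andP: (ht) => t0 t1.
have [->|tn0] := eqVneq t 0.
  rewrite /Sf; under eq_bigr => a _ do rewrite W_zero //.
  by rewrite hs ltr01.
have tp : 0 < t by rewrite lt_def tn0 t0.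
case: (lerP (2 * t) 1) => h2.
  have : s0 \in (\bigcup_(j < m) Gs j)%SET by rewrite -GU.
  case/bigcupP => j _ hj.
  apply: (lt_le_trans _ (S_ge Gs j0 (inr j) ht hx)).
  rewrite /= min_1; last lra.
  have hl : Num.max 0 (2 * t - \sum_(v | v \notin s0) x (inl v)) = 2 * t.
    rewrite big1 ?subr0; last by move=> v; exact: hout.
    rewrite max_id //; lra.
  have hsum : 2 * t <= \sum_(s in Gs j) Num.max 0 (2 * t - \sum_(v | v \notin s) x (inl v)).
    rewrite (bigD1 s0) //= hl lerDl; apply: sumr_ge0 => s _; exact: max0_ge0.
  have hb : 0 <= (if j == j0 then Num.max 0 (2 * t - 1) else 0).
    by case: ifP => _ //; exact: max0_ge0.
  have := hx (inr j); move: hsum hb.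
  set S1 := \sum_(s in Gs j) _; set B := (if _ then _ else _); lra.
apply: (lt_le_trans _ (S_ge Gs j0 (inr j0) ht hx)).
rewrite /= eqxx max_id; last lra.
have : 0 <= Num.min 1 (2 - 2 * t) * (x (inr j0) + \sum_(s in Gs j0)
    Num.max 0 (2 * t - \sum_(v | v \notin s) x (inl v))).
  apply: mulr_ge0; first by rewrite minEle; case: ifP => // _; lra.
  by apply: addr_ge0 => //; apply: sumr_ge0 => s _; exact: max0_ge0.
set P := _ * _; lra.
Qed.

Lemma W_supp (R : realType) n m (Gamma : {set {set 'I_n}}) (Gs : 'I_m -> {set {set 'I_n}})
  (j0 : 'I_m) (t : R) (x : {ptws ('I_n + 'I_m)%type -> R}) :
  simplicial_complex Gamma ->
  (forall j, simplicial_complex (Gs j)) ->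
  Gamma = (\bigcup_(j < m) Gs j)%SET -> 0 <= t <= 1 ->
  geom_real (tilde_complex Gamma Gs) x ->
  finset (fun a => Hf Gs j0 (t, x) a != 0) \in tilde_complex Gamma Gs.
Proof.
move=> [_ Gc] Gsc GU ht hA.
have Sp := S_pos j0 GU ht hA.
have hA' := hA; case: hA' => hx [hs _].
have [s0 hs0 [hout hin hy]] := geom_inv hA.
case/andP: (ht) => t0 t1.
have hH a : (Hf Gs j0 (t, x) a != 0) = (Wf Gs j0 (t, x) a != 0).
  by rewrite /Hf mulf_eq0 invr_eq0 negb_or (gt_eqF Sp) andbT.
set s := [set v | Wf Gs j0 (t, x) (inl v) != 0]%SET.
have ss0 : s \subset s0.
  apply/fintype.subsetP => v; rewrite inE /= => /maxpos hv; apply: hin.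
  have : 0 < x (inl v) by lra.
  by move/gt_eqF => ->.
apply: (in_tilde (s := s)).
- exact: (Gc s0).
- by move=> v; rewrite hH inE.
move=> j; rewrite hH => hW.
case: (boolP (s \in Gs j)) => // hn; exfalso.
move/eqP: hW; apply => /=.
have e1 : x (inr j) = 0.
  apply/eqP; apply/negPn/negP => hxj; apply: (negP hn).
  exact: ((Gsc j).2 s0 s (hy j hxj) ss0).
have e2 : \sum_(σ in Gs j) Num.max 0 (2 * t - \sum_(v | v \notin σ) x (inl v)) = 0.
  apply: big1 => σ hσ; apply/eqP; apply/negPn/negP => /maxpos hl.
  apply: (negP hn); apply: ((Gsc j).2 σ s hσ).
  apply/fintype.subsetP => v; rewrite inE /= => /maxpos hv.
  apply/negPn/negP => hvn.
  have : x (inl v) <= \sum_(w | w \notin σ) x (inl w).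
    by rewrite (bigD1 v) //= lerDl; apply: sumr_ge0.
  lra.
have e3 : (if j == j0 then Num.max 0 (2 * t - 1) else 0) = 0.
  case: eqP => // ej; subst j.
  have [h|h] := lerP (2 * t - 1) 0 => //.
  exfalso; apply: (negP hn); apply: ((Gsc j0).2 finset.set0 s (Gsc j0).1).
  apply/fintype.subsetP => v; rewrite inE /= => /maxpos hv.
  have := le1 (inl v) hx hs; lra.
by rewrite e1 e2 e3 add0r mulr0 addr0.
Qed.

End Helpers4.

Theorem lemma4p2 (R : realType) (n m : nat) (Gamma : {set {set 'I_n}})
    (Gs : 'I_m -> {set {set 'I_n}}) :
  (1 <= m)%N ->
  simplicial_complex Gamma ->
  (forall j, simplicial_complex (Gs j)) ->
  (forall j, Gs j \subset Gamma) ->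
  Gamma = \bigcup_(j < m) Gs j ->
  @contractible R {ptws ('I_n + 'I_m)%type -> R} (@geom_real R _ (tilde_complex Gamma Gs)).
Proof.
move=> m1 Gsim Gsc GsG GU.
pose j0 : 'I_m := Ordinal m1.
exists (ef R (n:=n) j0), (Hf Gs j0).
split; [|split; [|split; [|split]]].
- split; first by case=> [v|j] /=; [exact: lexx | case: ifP => _; [exact: ler01|exact: lexx]].
  split; first exact: sum_ef.
  apply: (in_tilde (s := finset.set0)); first exact: Gsim.1.
    by move=> v; rewrite /= eqxx inE.
  by move=> j _; exact: (Gsc j).1.
- apply: continuous_in_subspaceT => -[t x] /set_mem [/= ht hx].
  move: ht; rewrite in_itv /= => ht.
  apply: ptws_cont_at => a; rewrite /Hf.
  apply: cDiv; first by rewrite gt_eqF // (S_pos j0 GU ht hx).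
    exact: Wf_cont.
  rewrite /Sf; apply: cS => b; exact: Wf_cont.
- move=> t x ht hx.
  have Sp := S_pos j0 GU ht hx.
  split; first by move=> a; rewrite /Hf; apply: divr_ge0; [exact: W_ge0 hx.1 | exact: ltW].
  split; first by rewrite /Hf -mulr_suml -/(Sf Gs j0 (t, x)) divff // gt_eqF.
  exact: W_supp.
- move=> x hx; apply: funext => a.
  have hx0 := hx.1.
  rewrite /Hf /Sf W_zero //.
  under eq_bigr => b _ do rewrite W_zero //.
  by rewrite hx.2.1 divr1.
- move=> x hx; apply: funext => a.
  have h1 b : (x b <= 1)%R by apply: le1; [exact: hx.1 | exact: hx.2.1].
  rewrite /Hf /Sf W_one //.
  under eq_bigr => b _ do rewrite W_one //.
  by rewrite sum_ef divr1.
Qed.
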